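(* Let $a>0$, $C>0$, $a'\in\mathbb{R}$, $b=2a'C^2$, $\omega=a^2/4$, $\alpha=a+b/2$, $\beta=b/2$, let $k_\pm(\lambda)=\sqrt{-\omega\mp i\lambda}$ be the branches analytic on $\mathbb{C}\setminus\mathcal{C}_\pm$ with $\operatorname{Im}k_\pm>0$ there, where $\mathcal{C}_+=[i\omega,i\infty)$, $\mathcal{C}_-=(-i\infty,-i\omega]$, and let $$ D(\lambda)=\alpha^2+2i\alpha(k_++k_-)-4k_+k_--\beta^2. $$ Let $\gamma_2=a'C^2$ and $\lambda_2=i\frac{\gamma_2}{2}\sqrt{4\omega-\gamma_2^2}$. Then: (i) if $a'\in(-\infty,a/(\sqrt2C^2))$, the only zero of $D$ is $\lambda=0$, with multiplicity $2$; (ii) if $a'\in[a/(\sqrt2C^2),a/C^2)$, the zeros of $D$ are $\lambda=0$ (multiplicity two) and the two purely imaginary numbers $\pm i|\lambda_2|$; (iii) if $a'=a/C^2$, the only zero of $D$ is $\lambda=0$, with multiplicity $4$; (iv) if $a'\in(a/C^2,+\infty)$, the zeros of $D$ are $\lambda=0$ (multiplicity two) and the two real numbers $\pm|\lambda_2|$; in particular there is a positive zero.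
   Context: Here $a=a(C^2)$, $a'=a'(C^2)$ for the nonlinearity $F(\psi)=a(|\psi|^2)\psi$; $D(\lambda)$ is the determinant whose zeros in $\mathbb{C}\setminus(\mathcal{C}_+\cup\mathcal{C}_-)$ are the poles of the resolvent of the linearization at the solitary wave $Ce^{-\sqrt\omega|x|}$. *)

(* Defs.v *)
From HB Require Import structures.
From mathcomp Require Import all_boot all_order all_algebra.
From mathcomp Require Export complex.
From mathcomp Require Import all_classical all_reals all_analysis.
Import Order.TTheory GRing.Theory Num.Theory.
Import numFieldNormedType.Exports.
Set Implicit Arguments. Unset Strict Implicit. Unset Printing Implicit Defensive.
Local Open Scope ring_scope.
Local Open Scope complex_scope.

Section Defs.
Variable R : realType.

Definition omega (a : R) : R := a ^+ 2 / 4%:R.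

(* k_+(lam) = sqrt(-omega - i lam), branch with Im k_+ > 0 on C \ C_+,
   written via the principal square root sqrtc (Re >= 0, cut along (-oo,0]):
   k_+(lam) = i * sqrtc(omega + i lam).  It is continuous up to the branch
   point i*omega where it vanishes. *)
Definition kplus (a : R) (lam : R[i]) : R[i] := 'i * sqrtc ((omega a)%:C + 'i * lam).
Definition kminus (a : R) (lam : R[i]) : R[i] := 'i * sqrtc ((omega a)%:C - 'i * lam).

Definition bb (C a' : R) : R := 2%:R * a' * C ^+ 2.
Definition alpha (a C a' : R) : R := a + bb C a' / 2%:R.
Definition beta (C a' : R) : R := bb C a' / 2%:R.

Definition Ddet (a C a' : R) (lam : R[i]) : R[i] :=
  (alpha a C a')%:C ^+ 2 + 2%:R * 'i * (alpha a C a')%:C * (kplus a lam + kminus a lam)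
  - 4%:R * kplus a lam * kminus a lam - (beta C a')%:C ^+ 2.

(* Domain: C minus the cuts C_+ = [i omega, i oo), C_- = (-i oo, -i omega],
   where the two branch points +-i omega are kept (D extends continuously
   there). *)
Definition in_domain (a : R) (lam : R[i]) : Prop :=
  ~ (complex.Re lam = 0 /\ omega a < `|complex.Im lam|).

Definition gamma2 (C a' : R) : R := a' * C ^+ 2.
Definition lambda2 (a C a' : R) : R[i] :=
  'i * ((gamma2 C a') / 2%:R)%:C
     * sqrtc ((4%:R * omega a - gamma2 C a' ^+ 2)%:C).

Definition holo_near (g : R[i] -> R[i]) (z : R[i]) : Prop :=
  \forall w \near (z : R[i]^o), derivable (g : R[i]^o -> R[i]^o) w 1.

Definition zero_of_mult (f : R[i] -> R[i]) (z0 : R[i]) (m : nat) : Prop :=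
  exists g : R[i] -> R[i],
    [/\ holo_near g z0, g z0 != 0 &
        \forall w \near (z0 : R[i]^o), f w = (w - z0) ^+ m * g w].

End Defs.

(* Main.v *)
Require Import Defs.
From HB Require Import structures.
From mathcomp Require Import all_boot all_order all_algebra.
From mathcomp Require Import complex.
From mathcomp Require Import all_classical all_reals all_analysis.
From mathcomp Require Import ring lra.
Import Order.TTheory GRing.Theory Num.Theory.
Import numFieldNormedType.Exports.
Local Open Scope ring_scope.
Local Open Scope complex_scope.

Section Helpers.
Local Open Scope classical_set_scope.
Lemma Re_sqrtc_ge0 {R : realType} (z : R[i]) : 0 <= complex.Re (sqrtc z).
Proof. by case: z => x y; rewrite /sqrtc /= sqrtr_ge0. Qed.

Lemma Re_le_norm {R : realType} (z : R[i]) : (complex.Re z)%:C <= `|z|.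
Proof.
apply: le_trans (normc_ge_Re z); rewrite lecR; exact: ler_norm.
Qed.

Lemma sq_diff {R : realType} (c0 k w1 w2 : R[i]) :
  0 < complex.Re (sqrtc (c0 + k * w1) + sqrtc (c0 + k * w2)) ->
  sqrtc (c0 + k * w1) - sqrtc (c0 + k * w2) =
  k * (w1 - w2) / (sqrtc (c0 + k * w1) + sqrtc (c0 + k * w2)).
Proof.
move=> hr.
have hne : sqrtc (c0 + k * w1) + sqrtc (c0 + k * w2) != 0.
  apply/eqP => h.
  have : complex.Re (sqrtc (c0 + k * w1) + sqrtc (c0 + k * w2)) = 0 by rewrite h.
  by move: hr; rewrite h /= ltxx.
apply: (mulIf hne); rewrite mulfVK // -subr_sqr !sqr_sqrtc; ring.
Qed.

Lemma sq_cont {R : realType} (c0 k w0 : R[i]) : `|k| = 1 -> 0 < complex.Re (sqrtc (c0 + k * w0)) ->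
  (fun h : R[i]^o => (sqrtc (c0 + k * (h + w0)) : R[i]^o)) @ (0 : R[i]^o) --> (sqrtc (c0 + k * w0) : R[i]^o).
Proof.
move=> hk hr; apply/(@cvgrPdist_lt _ _ _ _ (nbhs_filter (0 : R[i]^o))) => e e0.
set rho : R[i] := (complex.Re (sqrtc (c0 + k * w0)))%:C.
have rho0 : 0 < rho by rewrite ltcR.
near=> h.
set q := sqrtc (c0 + k * (h + w0)); set q0 := sqrtc (c0 + k * w0).
have hd : q0 - q = k * (w0 - (h + w0)) / (q0 + q).
  rewrite /q /q0 sq_diff // raddfD /=.
  have := Re_sqrtc_ge0 (c0 + k * (h + w0)); lra.
have hs : rho <= `|q0 + q|.
  apply: le_trans (Re_le_norm _); rewrite lecR raddfD /=.
  have := Re_sqrtc_ge0 (c0 + k * (h + w0)); rewrite -/q; lra.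
have hs0 : q0 + q != 0 by rewrite -normr_gt0; exact: lt_le_trans hs.
have hh : `|q0 - q| * `|q0 + q| = `|h|.
  by rewrite hd -normrM mulfVK // normrM hk mul1r opprD addrCA subrr addr0 normrN.
rewrite -(ltr_pM2r rho0); apply: le_lt_trans (ler_wpM2l (normr_ge0 _) hs) _.
rewrite hh; near: h; exact: (@nbhs0_lt _ R[i]^o _ (mulr_gt0 e0 rho0)).
Unshelve. all: by end_near. Qed.


Lemma der_sq {R : realType} (c0 k w0 : R[i]) : `|k| = 1 -> 0 < complex.Re (sqrtc (c0 + k * w0)) ->
  derivable ((fun w => sqrtc (c0 + k * w)) : R[i]^o -> R[i]^o) w0 1.
Proof.
move=> hk hr; apply/cvg_ex.
exists ((k / (sqrtc (c0 + k * w0) + sqrtc (c0 + k * w0))) : R[i]^o).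
apply: cvg_trans; first apply: (@near_eq_cvg _ _ _ _
  (fun h : R[i]^o => (k / (sqrtc (c0 + k * (h + w0)) + sqrtc (c0 + k * w0)) : R[i]^o))).
  near=> h.
  have hn0 : h != 0 by near: h; exact: nbhs_dnbhs_neq.
  rewrite /= /shift /= /GRing.scale /= mulr1.
  rewrite sq_diff; last first.
    rewrite raddfD /=; have := Re_sqrtc_ge0 (c0 + k * (h + w0)); lra.
  by rewrite addrK [k * h]mulrC -mulrA mulKf.
apply: (@cvg_within_filter _ _ _ (nbhs (0:R[i]^o)) _ _ (fun y => y != 0)).
apply: cvgM; first exact: cvg_cst.
apply: cvgV.
  apply/eqP => h.
  have : complex.Re (sqrtc (c0 + k * w0) + sqrtc (c0 + k * w0)) = 0 by rewrite h.
  rewrite raddfD /=; lra.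
apply: cvgD; last exact: cvg_cst.
exact: sq_cont.
Unshelve. all: by end_near. Qed.

Lemma sqrtc_uniq {R : realType} (z x : R[i]) : x ^+ 2 = z -> 0 < complex.Re x -> sqrtc z = x.
Proof.
move=> hx hr.
have h : (sqrtc z - x) * (sqrtc z + x) = 0.
  by rewrite -subr_sqr sqr_sqrtc hx subrr.
move/eqP: h; rewrite mulf_eq0 => /orP [/eqP h|/eqP h].
  by apply/eqP; rewrite -subr_eq0 h.
have : complex.Re (sqrtc z + x) = 0 by rewrite h.
rewrite raddfD /= => h2.
exfalso; have := Re_sqrtc_ge0 z; lra.
Qed.

Lemma sqrtc_real_ge0 {R : realType} (c : R) : 0 <= c -> sqrtc c%:C = (Num.sqrt c)%:C.
Proof. by move=> hc; rewrite sqrtc_sqrtr ?ler0c. Qed.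

Lemma sqrtc_real_le0 {R : realType} (c : R) : c <= 0 -> sqrtc c%:C = 'i * (Num.sqrt (- c))%:C.
Proof.
move=> hc; rewrite /sqrtc /= eqxx mul1r expr0n /= addr0 sqrtr_sqr ler0_norm //.
rewrite addNr mul0r sqrtr0.
have -> : (- c - c) / 2 = - c.
  by field.
by simpc.
Qed.

Lemma core_alg {R : realType} (j s t H G w : R[i]) : j^+2 = -1 -> s^+2 = H^+2 + j*w -> t^+2 = H^+2 - j*w ->
 (2*H+G)^+2 + 2*j*(2*H+G)*(j*s + j*t) - 4*(j*s)*(j*t) - G^+2 = 2*(s+t-2*H)*(s+t-G).
Proof.
move=> hi hs ht; apply/eqP; rewrite -subr_eq0; apply/eqP.
have -> : (2*H+G)^+2 + 2*j*(2*H+G)*(j*s + j*t) - 4*(j*s)*(j*t) - G^+2 - 2*(s+t-2*H)*(s+t-G)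
  = (j^+2+1)*(2*(2*H+G)*(s+t) - 4*s*t) - 2*(s^+2 - H^+2 - j*w) - 2*(t^+2 - H^+2 + j*w) by ring.
rewrite hi hs ht. ring.
Qed.

Lemma mult_alg {R : realType} (j s t H w : R[i]) : j^+2 = -1 -> s^+2 = H^+2 + j*w -> t^+2 = H^+2 - j*w ->
 (s+t-2*H)*((s+H)*(t+H)*(s+t)) = 2*w^+2.
Proof.
move=> hi hs ht; apply/eqP; rewrite -subr_eq0; apply/eqP.
have -> : (s+t-2*H)*((s+H)*(t+H)*(s+t)) - 2*w^+2 =
  (s^+2 - H^+2 - j*w)*((t+H)*(s+t) - j*w) + (t^+2 - H^+2 + j*w)*((s+H)*(s+t) + j*w)
  - 2*w^+2*(j^+2+1) by ring.
rewrite hi hs ht; ring.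
Qed.

Lemma diff_alg {R : realType} (j s t H w : R[i]) : s^+2 = H^+2 + j*w -> t^+2 = H^+2 - j*w ->
 (s - t) * (s + t) = 2 * j * w.
Proof. move=> hs ht; rewrite -subr_sqr hs ht; ring. Qed.

Lemma alphaE {R : realType} (a C a' : R) :
  (alpha a C a')%:C = 2 * (a/2)%:C + (gamma2 C a')%:C.
Proof.
rewrite -(rmorph_nat (real_complex R)) -!rmorphM -rmorphD; congr (_%:C).
rewrite /alpha /bb /gamma2; by field.
Qed.

Lemma betaE {R : realType} (C a' : R) : (beta C a')%:C = (gamma2 C a')%:C.
Proof. congr (_%:C); rewrite /beta /bb /gamma2; by field. Qed.

Lemma omegaE {R : realType} (a : R) : (omega a)%:C = ((a/2)%:C)^+2.
Proof. rewrite -rmorphXn; congr (_%:C); rewrite /omega; by field. Qed.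

Definition sP {R : realType} (a : R) (w : R[i]) := sqrtc ((omega a)%:C + 'i * w).
Definition sM {R : realType} (a : R) (w : R[i]) := sqrtc ((omega a)%:C - 'i * w).

Lemma sP_sq {R : realType} (a : R) w : (sP a w)^+2 = ((a/2)%:C)^+2 + 'i * w.
Proof. by rewrite /sP sqr_sqrtc omegaE. Qed.
Lemma sM_sq {R : realType} (a : R) w : (sM a w)^+2 = ((a/2)%:C)^+2 - 'i * w.
Proof. by rewrite /sM sqr_sqrtc omegaE. Qed.

Lemma D_fact {R : realType} (a C a' : R) w : Ddet a C a' w =
  2 * (sP a w + sM a w - 2 * (a/2)%:C) * (sP a w + sM a w - (gamma2 C a')%:C).
Proof. rewrite /Ddet /kplus /kminus alphaE betaE -/(sP a w) -/(sM a w). exact: (core_alg _ _ _ _ _ _ (sqr_i R) (sP_sq a w) (sM_sq a w)). Qed.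

Lemma ii {R : realType} : 'i * 'i = -1 :> R[i].
Proof. by rewrite -expr2 sqr_i. Qed.

Lemma D_zero {R : realType} (a C a' : R) w : Ddet a C a' w = 0 ->
  w = 0 \/ (sP a w + sM a w = (gamma2 C a')%:C /\
            (sP a w - sM a w) * (gamma2 C a')%:C = 2 * 'i * w).
Proof.
rewrite D_fact => /eqP; rewrite !mulf_eq0 pnatr_eq0 /= => /orP [/eqP h|/eqP h].
  left; have := mult_alg _ _ _ _ _ (sqr_i R) (sP_sq a w) (sM_sq a w).
  rewrite h mul0r => /esym/eqP; rewrite mulf_eq0 pnatr_eq0 /= expf_eq0 /=.
  by move/eqP.
right; have hs : sP a w + sM a w = (gamma2 C a')%:C by apply/eqP; rewrite -subr_eq0 h.
split => //; rewrite -hs; exact: (diff_alg _ _ _ _ _ (sP_sq a w) (sM_sq a w)).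
Qed.

Lemma D_root {R : realType} (a C a' : R) w :
  sP a w + sM a w = (gamma2 C a')%:C -> Ddet a C a' w = 0.
Proof. by move=> h; rewrite D_fact h subrr mulr0. Qed.

Lemma sP0 {R : realType} (a : R) : 0 <= a -> sP a 0 = (a/2)%:C.
Proof.
move=> ha; rewrite /sP mulr0 addr0 sqrtc_real_ge0; last by rewrite /omega; exact: divr_ge0 (sqr_ge0 _) _.
congr (_%:C); have -> : omega a = (a/2)^+2 by rewrite /omega; field.
by rewrite sqrtr_sqr ger0_norm // divr_ge0.
Qed.

Lemma sM0 {R : realType} (a : R) : 0 <= a -> sM a 0 = (a/2)%:C.
Proof.
move=> ha; rewrite /sM mulr0 subr0 sqrtc_real_ge0; last by rewrite /omega; exact: divr_ge0 (sqr_ge0 _) _.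
congr (_%:C); have -> : omega a = (a/2)^+2 by rewrite /omega; field.
by rewrite sqrtr_sqr ger0_norm // divr_ge0.
Qed.

Lemma D_at0 {R : realType} (a C a' : R) : 0 <= a -> Ddet a C a' 0 = 0.
Proof. move=> ha; rewrite D_fact sP0 // sM0 //. have -> : (a / 2)%:C + (a / 2)%:C - 2 * (a / 2)%:C = 0 :> R[i] by ring. by rewrite mulr0 mul0r. Qed.

Lemma sq_real {R : realType} (d : R[i]) (c : R) : d^+2 = c%:C ->
  (0 <= c -> d = (Num.sqrt c)%:C \/ d = -(Num.sqrt c)%:C) /\
  (c <= 0 -> d = 'i * (Num.sqrt (-c))%:C \/ d = -('i * (Num.sqrt (-c))%:C)).
Proof.
move=> hd; split => hc.
  have : (d - (Num.sqrt c)%:C) * (d + (Num.sqrt c)%:C) = 0.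
    by rewrite -subr_sqr hd -rmorphXn sqr_sqrtr // subrr.
  move/eqP; rewrite mulf_eq0 => /orP [/eqP h|/eqP h].
    by left; apply/eqP; rewrite -subr_eq0 h.
  by right; apply/eqP; rewrite -subr_eq0 opprK h.
have : (d - 'i * (Num.sqrt (-c))%:C) * (d + 'i * (Num.sqrt (-c))%:C) = 0.
  rewrite -subr_sqr hd exprMn sqr_i -rmorphXn sqr_sqrtr ?oppr_ge0 //.
  by rewrite mulN1r -rmorphN opprK subrr.
move/eqP; rewrite mulf_eq0 => /orP [/eqP h|/eqP h].
  by left; apply/eqP; rewrite -subr_eq0 h.
by right; apply/eqP; rewrite -subr_eq0 opprK h.
Qed.

Lemma norm_real {R : realType} (x : R) : `|x%:C| = `|x|%:C.
Proof. by rewrite normc_def /= expr0n /= addr0 sqrtr_sqr. Qed.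

Lemma norm_i {R : realType} : `|'i| = 1 :> R[i].
Proof. by rewrite normc_def /= expr0n /= add0r expr1n sqrtr1. Qed.

Lemma l2_ge0 {R : realType} (a C a' : R) : 0 <= gamma2 C a' ->
  0 <= a^+2 - (gamma2 C a')^+2 ->
  `|lambda2 a C a'| = (gamma2 C a' * Num.sqrt (a^+2 - (gamma2 C a')^+2) / 2)%:C.
Proof.
move=> hg hc; rewrite /lambda2.
have -> : 4%:R * omega a - gamma2 C a' ^+ 2 = a^+2 - (gamma2 C a')^+2 by rewrite /omega; field.
rewrite sqrtc_real_ge0 // -mulrA -rmorphM normrM norm_i mul1r norm_real ger0_norm.
  by congr (_%:C); field.
by apply: mulr_ge0; [exact: divr_ge0 | exact: sqrtr_ge0].
Qed.

Lemma l2_le0 {R : realType} (a C a' : R) : 0 <= gamma2 C a' ->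
  a^+2 - (gamma2 C a')^+2 <= 0 ->
  `|lambda2 a C a'| = (gamma2 C a' * Num.sqrt ((gamma2 C a')^+2 - a^+2) / 2)%:C.
Proof.
move=> hg hc; rewrite /lambda2.
have -> : 4%:R * omega a - gamma2 C a' ^+ 2 = a^+2 - (gamma2 C a')^+2 by rewrite /omega; field.
rewrite sqrtc_real_le0 // opprB.
have -> : forall X Y : R[i], 'i * X * ('i * Y) = -(X * Y).
  by move=> X Y; rewrite mulrCA !mulrA ii mulN1r mulNr.
rewrite normrN -rmorphM norm_real ger0_norm.
  by congr (_%:C); field.
by apply: mulr_ge0; [exact: divr_ge0 | exact: sqrtr_ge0].
Qed.

Lemma norm_mi {R : realType} : `|- 'i| = 1 :> R[i].
Proof. by rewrite normrN norm_i. Qed.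

Lemma sM_alt {R : realType} (a : R) : sM a = (fun w => sqrtc ((omega a)%:C + (- 'i) * w)).
Proof. by apply/funext => w; rewrite /sM mulNr. Qed.

Lemma pos_of_close {R : realType} (a : R) (q : R[i]) :
  `|(a/2)%:C - q| < (a/2)%:C -> 0 < complex.Re q.
Proof.
move=> h; have := le_lt_trans (Re_le_norm _) h.
rewrite ltcR raddfB /=; lra.
Qed.

Lemma near_pos {R : realType} (a : R) : 0 < a ->
  \forall w \near (0 : R[i]^o), 0 < complex.Re (sP a w) /\ 0 < complex.Re (sM a w).
Proof.
move=> ha.
have ha2 : 0 < (a/2)%:C :> R[i] by rewrite ltcR; lra.
have hP : 0 < complex.Re (sqrtc ((omega a)%:C + 'i * 0)).
  by have := sP0 a (ltW ha); rewrite /sP => ->; rewrite /=; lra.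
have hM : 0 < complex.Re (sqrtc ((omega a)%:C + (- 'i) * 0)).
  by have := sM0 a (ltW ha); rewrite /sM mulr0 subr0 => h0; rewrite mulr0 addr0 h0 /=; lra.
have /cvgr_dist_lt /(_ _ ha2) c1 := sq_cont _ _ _ norm_i hP.
have /cvgr_dist_lt /(_ _ ha2) c2 := sq_cont _ _ _ norm_mi hM.
have e1 : sqrtc ((omega a)%:C + 'i * 0) = (a/2)%:C :> R[i] by have := sP0 a (ltW ha).
have e2 : sqrtc ((omega a)%:C + (- 'i) * 0) = (a/2)%:C :> R[i].
  by have := sM0 a (ltW ha); rewrite /sM !mulr0 subr0 addr0.
rewrite e1 in c1; rewrite e2 in c2.
near=> w; split.
  apply: (@pos_of_close _ a); near: w; apply: (filterS _ c1) => w; by rewrite addr0.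
apply: (@pos_of_close _ a); near: w; apply: (filterS _ c2) => w; by rewrite addr0 /sM mulNr.
Unshelve. all: by end_near. Qed.

Lemma hdD {R : realType} (f g : R[i]^o -> R[i]^o) (x : R[i]^o) :
  derivable f x 1 -> derivable g x 1 -> derivable (fun y => f y + g y) x 1.
Proof. move=> df dg; have := derivableD df dg. by []. Qed.
Lemma hdB {R : realType} (f g : R[i]^o -> R[i]^o) (x : R[i]^o) :
  derivable f x 1 -> derivable g x 1 -> derivable (fun y => f y - g y) x 1.
Proof. move=> df dg; have := derivableB df dg. by []. Qed.
Lemma hdM {R : realType} (f g : R[i]^o -> R[i]^o) (x : R[i]^o) :
  derivable f x 1 -> derivable g x 1 -> derivable (fun y => f y * g y) x 1.
Proof. move=> df dg; have := derivableM df dg. by []. Qed.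
Lemma hdV {R : realType} (f : R[i]^o -> R[i]^o) (x : R[i]^o) :
  f x != 0 -> derivable f x 1 -> derivable (fun y => (f y)^-1) x 1.
Proof. move=> h df; have := derivableV h df. by []. Qed.
Lemma hdC {R : realType} (c : R[i]^o) (x : R[i]^o) : derivable (fun _ : R[i]^o => c) x 1.
Proof. exact: derivable_cst. Qed.

Definition den {R : realType} (a : R) (w : R[i]) :=
  (sP a w + (a/2)%:C) * (sM a w + (a/2)%:C) * (sP a w + sM a w).
Definition g2 {R : realType} (a C a' : R) (w : R[i]) :=
  4 * (sP a w + sM a w - (gamma2 C a')%:C) / den a w.
Definition g4 {R : realType} (a : R) (w : R[i]) := 8 / (den a w)^+2.

Lemma nz_Re {R : realType} (z : R[i]) : 0 < complex.Re z -> z != 0.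
Proof. by apply: contraTneq => ->; rewrite /= ltxx. Qed.

Lemma den_nz {R : realType} (a : R) w : 0 < a -> 0 < complex.Re (sP a w) -> den a w != 0.
Proof.
move=> ha hp; have hm := Re_sqrtc_ge0 ((omega a)%:C - 'i * w); rewrite -/(sM a w) in hm.
rewrite /den !mulf_neq0 //; apply: nz_Re; rewrite raddfD /=; lra.
Qed.

Lemma dsP {R : realType} (a : R) w : 0 < complex.Re (sP a w) ->
  derivable (sP a : R[i]^o -> R[i]^o) w 1.
Proof. move=> h; exact: (der_sq _ _ _ norm_i h). Qed.

Lemma dsM {R : realType} (a : R) w : 0 < complex.Re (sM a w) ->
  derivable (sM a : R[i]^o -> R[i]^o) w 1.
Proof.
move=> h; rewrite sM_alt; apply: (der_sq _ _ _ norm_mi).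
by move: h; rewrite /sM mulNr.
Qed.

Lemma dden {R : realType} (a : R) w : 0 < complex.Re (sP a w) -> 0 < complex.Re (sM a w) ->
  derivable (den a : R[i]^o -> R[i]^o) w 1.
Proof.
move=> h1 h2.
apply: (@hdM _ (fun y => (sP a y + (a/2)%:C) * (sM a y + (a/2)%:C))
            (fun y => sP a y + sM a y)).
  apply: (@hdM _ (fun y => sP a y + (a/2)%:C) (fun y => sM a y + (a/2)%:C)).
    by apply: (@hdD _ (sP a)); [exact: dsP | exact: hdC].
  by apply: (@hdD _ (sM a)); [exact: dsM | exact: hdC].
by apply: (@hdD _ (sP a)); [exact: dsP | exact: dsM].
Qed.

Lemma HH {R : realType} (a : R) : (a/2)%:C + (a/2)%:C = a%:C :> R[i].
Proof. by rewrite -rmorphD; congr (_%:C); field. Qed.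

Lemma twoH {R : realType} (a : R) : 2 * (a/2)%:C = a%:C :> R[i].
Proof. by rewrite mulr_natl mulr2n HH. Qed.

Lemma realC_neq0 {R : realType} (x : R) : x != 0 -> x%:C != 0 :> R[i].
Proof. by move=> h; rewrite eq_complex /= negb_and h. Qed.

Lemma hw_eq {R : realType} (a : R) w :
  w^+2 = (sP a w + sM a w - 2 * (a/2)%:C) * den a w / 2.
Proof.
have hm := mult_alg _ _ _ _ _ (sqr_i R) (sP_sq a w) (sM_sq a w).
rewrite /den hm; by field.
Qed.

Lemma mult2 {R : realType} (a C a' : R) : 0 < a -> gamma2 C a' != a ->
  zero_of_mult (Ddet a C a') 0 2.
Proof.
move=> ha hg; exists (g2 a C a'); split.
- rewrite /holo_near; near=> w.
  have [h1 h2] : 0 < complex.Re (sP a w) /\ 0 < complex.Re (sM a w) by near: w; exact: near_pos.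
  rewrite /g2.
  apply: (@hdM _ (fun y => 4 * (sP a y + sM a y - (gamma2 C a')%:C)) (fun y => (den a y)^-1)).
    apply: (@hdM _ (fun _ => 4) (fun y => sP a y + sM a y - (gamma2 C a')%:C)); first exact: hdC.
    apply: (@hdB _ (fun y => sP a y + sM a y) (fun _ => (gamma2 C a')%:C)); last exact: hdC.
    by apply: (@hdD _ (sP a) (sM a)); [exact: dsP|exact: dsM].
  by apply: (@hdV _ (den a)); [exact: den_nz | exact: dden].
- rewrite /g2 /den sP0 ?sM0 ?(ltW ha) // HH -rmorphB.
  rewrite mulf_neq0 ?invr_neq0 ?mulf_neq0 ?pnatr_eq0 //; apply: realC_neq0; first by rewrite subr_eq0 eq_sym.
  1-3: exact: lt0r_neq0.
- near=> w.
  have [h1 h2] : 0 < complex.Re (sP a w) /\ 0 < complex.Re (sM a w) by near: w; exact: near_pos.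
  have dn := den_nz a w ha h1.
  rewrite subr0 D_fact /g2 (hw_eq a w); field.
  by [].
Unshelve. all: by end_near. Qed.

Lemma mult4 {R : realType} (a C a' : R) : 0 < a -> gamma2 C a' = a ->
  zero_of_mult (Ddet a C a') 0 4.
Proof.
move=> ha hg; exists (g4 a); split.
- rewrite /holo_near; near=> w.
  have [h1 h2] : 0 < complex.Re (sP a w) /\ 0 < complex.Re (sM a w) by near: w; exact: near_pos.
  rewrite /g4.
  apply: (@hdM _ (fun _ => 8) (fun y => ((den a y)^+2)^-1)); first exact: hdC.
  apply: (@hdV _ (fun y => (den a y)^+2)); first by rewrite expf_neq0 // den_nz.
  have -> : (fun y => (den a y)^+2) = (fun y => den a y * den a y).
    by apply/funext => y; rewrite expr2.
  by apply: (@hdM _ (den a) (den a)); exact: dden.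
- rewrite /g4 /den sP0 ?sM0 ?(ltW ha) // HH.
  by rewrite mulf_neq0 ?invr_neq0 ?expf_neq0 ?mulf_neq0 ?pnatr_eq0 // realC_neq0 // lt0r_neq0.
- near=> w.
  have [h1 h2] : 0 < complex.Re (sP a w) /\ 0 < complex.Re (sM a w) by near: w; exact: near_pos.
  have dn := den_nz a w ha h1.
  rewrite subr0 D_fact /g4 hg -twoH.
  have -> : w^+4 = (w^+2)^+2 by rewrite -exprM.
  rewrite (hw_eq a w); field.
  by [].
Unshelve. all: by end_near. Qed.

Lemma branch {R : realType} (a C a' : R) w : Ddet a C a' w = 0 ->
  w = 0 \/ exists d : R[i],
  [/\ d^+2 = (a^+2 - (gamma2 C a')^+2)%:C, d * (gamma2 C a')%:C = 2 * 'i * w,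
      0 <= gamma2 C a' + complex.Re d & 0 <= gamma2 C a' - complex.Re d].
Proof.
move/D_zero => [->|[hs hd]]; first by left.
right; exists (sP a w - sM a w); split => //.
- have -> : (sP a w - sM a w)^+2 = 2 * (sP a w)^+2 + 2 * (sM a w)^+2 - (sP a w + sM a w)^+2 by ring.
  rewrite hs sP_sq sM_sq.
  have -> : 2 * ((a / 2)%:C ^+ 2 + 'i * w) + 2 * ((a / 2)%:C ^+ 2 - 'i * w) - (gamma2 C a')%:C ^+ 2
    = 4 * ((a / 2)%:C ^+ 2) - (gamma2 C a')%:C ^+ 2 :> R[i] by ring.
  rewrite -!rmorphXn -(rmorph_nat (real_complex R)) -rmorphM -rmorphB; congr (_%:C); by field.
- have := Re_sqrtc_ge0 ((omega a)%:C + 'i * w); rewrite -/(sP a w) => h1.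
  have := Re_sqrtc_ge0 ((omega a)%:C - 'i * w); rewrite -/(sM a w) => h2.
  have : complex.Re (sP a w + sM a w) = gamma2 C a' by rewrite hs.
  rewrite raddfB /= raddfD /=; lra.
- have := Re_sqrtc_ge0 ((omega a)%:C + 'i * w); rewrite -/(sP a w) => h1.
  have := Re_sqrtc_ge0 ((omega a)%:C - 'i * w); rewrite -/(sM a w) => h2.
  have : complex.Re (sP a w + sM a w) = gamma2 C a' by rewrite hs.
  rewrite raddfB /= raddfD /=; lra.
Qed.

Lemma w_of {R : realType} (d G w : R[i]) : d * G = 2 * 'i * w -> w = - ('i * (d * G)) / 2.
Proof.
move=> h; rewrite h.
have -> : 'i * (2 * 'i * w) = 2 * ('i * 'i) * w :> R[i] by ring.
rewrite ii; by field.
Qed.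

Lemma sP_at {R : realType} (a : R) w (x : R) : 0 <= x ->
  (omega a)%:C + 'i * w = (x^+2)%:C -> sP a w = x%:C.
Proof. by move=> hx h; rewrite /sP h sqrtc_real_ge0 ?sqr_ge0 // sqrtr_sqr ger0_norm. Qed.

Lemma sM_at {R : realType} (a : R) w (x : R) : 0 <= x ->
  (omega a)%:C - 'i * w = (x^+2)%:C -> sM a w = x%:C.
Proof. by move=> hx h; rewrite /sM h sqrtc_real_ge0 ?sqr_ge0 // sqrtr_sqr ger0_norm. Qed.

Lemma realC_div2 {R : realType} (y : R) : (y / 2)%:C = y%:C / 2 :> R[i].
Proof. by rewrite fmorph_div rmorph_nat. Qed.

Lemma wcalc {R : realType} (x g : R) :
  - ('i * (x%:C * g%:C)) / 2 = - ('i * (g * x / 2)%:C) :> R[i].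
Proof. rewrite realC_div2 rmorphM; ring. Qed.

Lemma wcalcN {R : realType} (x g : R) :
  - ('i * (- x%:C * g%:C)) / 2 = 'i * (g * x / 2)%:C :> R[i].
Proof.
have -> : - ('i * (- x%:C * g%:C)) / 2 = - (- ('i * (x%:C * g%:C)) / 2) :> R[i] by ring.
by rewrite wcalc opprK.
Qed.

Lemma wcalcI {R : realType} (x g : R) :
  - ('i * ('i * x%:C * g%:C)) / 2 = (g * x / 2)%:C :> R[i].
Proof.
have -> : - ('i * ('i * x%:C * g%:C)) / 2 = - ('i * 'i) * (x%:C * g%:C) / 2 :> R[i] by ring.
rewrite ii opprK mul1r realC_div2 rmorphM; ring.
Qed.

Lemma wcalcIN {R : realType} (x g : R) :
  - ('i * (- ('i * x%:C) * g%:C)) / 2 = - (g * x / 2)%:C :> R[i].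
Proof.
have -> : - ('i * (- ('i * x%:C) * g%:C)) / 2 = - (- ('i * ('i * x%:C * g%:C)) / 2) :> R[i] by ring.
by rewrite wcalcI.
Qed.

Lemma case1 {R : realType} (a C a' : R) w : 0 < a -> gamma2 C a' * Num.sqrt 2 < a ->
  Ddet a C a' w = 0 -> w = 0.
Proof.
move=> ha hg /branch [//|[d [hd hdg hp hm]]]; exfalso.
move: hd hdg hp hm hg; move: (gamma2 C a') => g hd hdg hp hm hg.
have s2 : Num.sqrt 2 ^+ 2 = 2 :> R by rewrite sqr_sqrtr.
have s2p : 0 < Num.sqrt 2 :> R by rewrite sqrtr_gt0.
have g0 : 0 <= g by lra.
have h2 : 2 * g^+2 < a^+2.
  have -> : 2 * g^+2 = (g * Num.sqrt 2)^+2 by rewrite exprMn s2; ring.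
  have : 0 <= g * Num.sqrt 2 by apply: mulr_ge0 => //; exact: ltW.
  move: (g * Num.sqrt 2) hg => t ht t0; nra.
case: (lerP 0 (a^+2 - g^+2)) => hc.
  have sc := sqr_sqrtr hc; have sc0 := sqrtr_ge0 (a^+2 - g^+2).
  have [] := (sq_real _ _ hd).1 hc => hdd; rewrite hdd /= in hp hm.
    nra.
  nra.
have [] := (sq_real _ _ hd).2 (ltW hc) => hdd; rewrite hdd /= in hp hm; nra.
Qed.

Lemma eqRI {R : realType} (z1 z2 : R[i]) :
  complex.Re z1 = complex.Re z2 -> complex.Im z1 = complex.Im z2 -> z1 = z2.
Proof. by case: z1 z2 => ? ? [? ?] /= -> ->. Qed.

Lemma D_root_real {R : realType} (a C a' : R) w (u v : R) : 0 <= u -> 0 <= v ->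
  (omega a)%:C + 'i * w = (u^+2)%:C -> (omega a)%:C - 'i * w = (v^+2)%:C ->
  u + v = gamma2 C a' -> Ddet a C a' w = 0.
Proof.
move=> hu hv h1 h2 h3; apply: D_root.
by rewrite (sP_at _ _ _ hu h1) (sM_at _ _ _ hv h2) -rmorphD h3.
Qed.

Lemma D_root_cplx {R : realType} (a C a' : R) w (u v : R) : 0 < u ->
  (Complex u v)^+2 = (omega a)%:C + 'i * w -> (Complex u (- v))^+2 = (omega a)%:C - 'i * w ->
  2 * u = gamma2 C a' -> Ddet a C a' w = 0.
Proof.
move=> hu h1 h2 h3; apply: D_root.
rewrite /sP /sM (sqrtc_uniq _ _ h1) // (sqrtc_uniq _ _ h2) //.
apply: eqRI => /=; [rewrite -h3 | ]; ring.
Qed.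

Lemma case2 {R : realType} (a C a' : R) w : 0 < a -> a <= gamma2 C a' * Num.sqrt 2 ->
  gamma2 C a' < a -> Ddet a C a' w = 0 ->
  [\/ w = 0, w = 'i * `|lambda2 a C a'| | w = - ('i * `|lambda2 a C a'|)].
Proof.
move=> ha hg1 hg2 /branch [->|[d [hd hdg hp hm]]]; first by constructor 1.
have s2 : Num.sqrt 2 ^+ 2 = 2 :> R by rewrite sqr_sqrtr.
have s2p : 0 < Num.sqrt 2 :> R by rewrite sqrtr_gt0.
have g0 : 0 < gamma2 C a' by nra.
have hc : 0 <= a^+2 - (gamma2 C a')^+2 by nra.
rewrite l2_ge0 //; last exact: ltW.
have hw := w_of _ _ _ hdg.
case: ((sq_real _ _ hd).1 hc) => hdd; rewrite hdd in hw.
  by constructor 3; rewrite hw wcalc.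
by constructor 2; rewrite hw wcalcN.
Qed.

Lemma case2b {R : realType} (a C a' : R) : 0 < a -> a <= gamma2 C a' * Num.sqrt 2 ->
  gamma2 C a' < a ->
  Ddet a C a' ('i * `|lambda2 a C a'|) = 0 /\ Ddet a C a' (- ('i * `|lambda2 a C a'|)) = 0.
Proof.
move=> ha hg1 hg2.
have s2 : Num.sqrt 2 ^+ 2 = 2 :> R by rewrite sqr_sqrtr.
have s2p : 0 < Num.sqrt 2 :> R by rewrite sqrtr_gt0.
have g0 : 0 < gamma2 C a' by nra.
have hc : 0 <= a^+2 - (gamma2 C a')^+2 by nra.
rewrite l2_ge0 //; last exact: ltW.
move: hg1 hg2 g0 hc; move E : (gamma2 C a') => g hg1 hg2 g0 hc.
have sc := sqr_sqrtr hc; have sc0 := sqrtr_ge0 (a^+2 - g^+2).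
move: sc sc0; move: (Num.sqrt (a ^+ 2 - g ^+ 2)) => r sc sc0.
have hrg : r <= g by nra.
have e1 : (omega a)%:C + 'i * ('i * (g * r / 2)%:C) = (((g - r)/2)^+2)%:C.
  rewrite mulrA ii mulN1r -rmorphN -rmorphD; congr (_%:C); rewrite /omega.
  have -> : a^+2 = r^+2 + g^+2 by rewrite sc; ring.
  by field.
have e2 : (omega a)%:C - 'i * ('i * (g * r / 2)%:C) = (((g + r)/2)^+2)%:C.
  rewrite mulrA ii mulN1r opprK -rmorphD; congr (_%:C); rewrite /omega.
  have -> : a^+2 = r^+2 + g^+2 by rewrite sc; ring.
  by field.
split.
  apply: (@D_root_real _ a C a' _ ((g - r)/2) ((g + r)/2)) => //.
  - by apply: divr_ge0; lra.
  - by apply: divr_ge0; lra.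
  - by rewrite E; field.
apply: (@D_root_real _ a C a' _ ((g + r)/2) ((g - r)/2)).
- by apply: divr_ge0; lra.
- by apply: divr_ge0; lra.
- by rewrite mulrN; exact: e2.
- by rewrite mulrN opprK; exact: e1.
- by rewrite E; field.
Qed.

Lemma case3 {R : realType} (a C a' : R) w : gamma2 C a' = a ->
  Ddet a C a' w = 0 -> w = 0.
Proof.
move=> hg /branch [//|[d [hd hdg _ _]]].
move: hd; rewrite hg subrr => hd.
have := (sq_real _ _ hd).1 (lexx 0); rewrite sqrtr0 oppr0 => hdd.
have d0 : d = 0 by case: hdd.
by rewrite (w_of _ _ _ hdg) d0 mul0r mulr0 oppr0 mul0r.
Qed.

Lemma case4 {R : realType} (a C a' : R) w : 0 < a -> a < gamma2 C a' ->
  Ddet a C a' w = 0 ->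
  [\/ w = 0, w = `|lambda2 a C a'| | w = - `|lambda2 a C a'|].
Proof.
move=> ha hg /branch [->|[d [hd hdg hp hm]]]; first by constructor 1.
have hc : a^+2 - (gamma2 C a')^+2 <= 0 by nra.
rewrite l2_le0 //; last by lra.
have hw := w_of _ _ _ hdg.
case: ((sq_real _ _ hd).2 hc) => hdd; rewrite hdd opprB in hw.
  by constructor 2; rewrite hw wcalcI.
by constructor 3; rewrite hw wcalcIN.
Qed.

Lemma case4b {R : realType} (a C a' : R) : 0 < a -> a < gamma2 C a' ->
  [/\ Ddet a C a' `|lambda2 a C a'| = 0, Ddet a C a' (- `|lambda2 a C a'|) = 0 &
      exists x : R, 0 < x /\ Ddet a C a' x%:C = 0].
Proof.
move=> ha hg.
have hc : a^+2 - (gamma2 C a')^+2 <= 0 by nra.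
rewrite l2_le0 //; last by lra.
move: hg hc; move E : (gamma2 C a') => g hg hc.
have hc' : 0 <= g^+2 - a^+2 by lra.
have sc := sqr_sqrtr hc'; have sc0 : 0 < Num.sqrt (g^+2 - a^+2) by rewrite sqrtr_gt0; nra.
move: sc sc0; move: (Num.sqrt (g ^+ 2 - a ^+ 2)) => q sc sc0.
have H1 : Ddet a C a' (g * q / 2)%:C = 0.
  apply: (@D_root_cplx _ a C a' _ (g/2) (q/2)).
  - lra.
  - apply: eqRI => /=; rewrite /omega.
      have -> : a^+2 = g^+2 - q^+2 by rewrite sc; ring.
      by field.
    by field.
  - apply: eqRI => /=; rewrite /omega.
      have -> : a^+2 = g^+2 - q^+2 by rewrite sc; ring.
      by field.
    by field.
  - by rewrite E; field.
have H2 : Ddet a C a' (- (g * q / 2)%:C) = 0.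
  apply: (@D_root_cplx _ a C a' _ (g/2) (- (q/2))).
  - lra.
  - apply: eqRI => /=; rewrite /omega.
      have -> : a^+2 = g^+2 - q^+2 by rewrite sc; ring.
      by field.
    by field.
  - apply: eqRI => /=; rewrite /omega.
      have -> : a^+2 = g^+2 - q^+2 by rewrite sc; ring.
      by field.
    by field.
  - by rewrite E; field.
split => //; exists (g * q / 2); split => //.
by apply: divr_gt0 => //; apply: mulr_gt0 => //; lra.
Qed.


End Helpers.

Theorem theoremA5 (R : realType) (a C a' : R) (ha : 0 < a) (hC : 0 < C) :
  let D := Ddet a C a' in
  let l2 := `|lambda2 a C a'| in
  (* (i) *)
  (a' < a / (Num.sqrt 2 * C ^+ 2) ->
     (forall lam, in_domain a lam -> (D lam = 0 <-> lam = 0))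
     /\ zero_of_mult D 0 2) /\
  (* (ii) *)
  (a / (Num.sqrt 2 * C ^+ 2) <= a' < a / C ^+ 2 ->
     (forall lam, in_domain a lam ->
        (D lam = 0 <-> [\/ lam = 0, lam = 'i * l2 | lam = - ('i * l2)]))
     /\ zero_of_mult D 0 2) /\
  (* (iii) *)
  (a' = a / C ^+ 2 ->
     (forall lam, in_domain a lam -> (D lam = 0 <-> lam = 0))
     /\ zero_of_mult D 0 4) /\
  (* (iv) *)
  (a / C ^+ 2 < a' ->
     (forall lam, in_domain a lam ->
        (D lam = 0 <-> [\/ lam = 0, lam = l2 | lam = - l2]))
     /\ zero_of_mult D 0 2
     /\ (exists x : R, 0 < x /\ D x%:C = 0)).
Proof.
move=> D l2; rewrite {}/D {}/l2.
have C2 : 0 < C ^+ 2 by rewrite exprn_gt0.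
have s2 : Num.sqrt 2 ^+ 2 = 2 :> R by rewrite sqr_sqrtr.
have s2p : 0 < Num.sqrt 2 :> R by rewrite sqrtr_gt0.
have s2C : 0 < Num.sqrt 2 * C ^+ 2 by rewrite mulr_gt0.
have gE : gamma2 C a' = a' * C ^+ 2 by [].
split; [|split; [|split]].
- rewrite ltr_pdivlMr // => h.
  have hg : gamma2 C a' * Num.sqrt 2 < a by rewrite gE; lra.
  split; last by apply: mult2 => //; apply/eqP => e; rewrite e in hg; nra.
  move=> lam _; split; first exact: case1.
  by move=> ->; apply: D_at0; exact: ltW.
- rewrite ler_pdivrMr // ltr_pdivlMr // => /andP [h1 h2].
  have hg1 : a <= gamma2 C a' * Num.sqrt 2 by rewrite gE; lra.
  have hg2 : gamma2 C a' < a by rewrite gE.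
  split; last by apply: mult2 => //; apply/eqP => e; rewrite e in hg2; lra.
  have [b1 b2] := case2b _ _ _ ha hg1 hg2.
  move=> lam _; split; first exact: case2.
  by case=> ->; [apply: D_at0; exact: ltW | exact: b1 | exact: b2].
- move=> h.
  have hg : gamma2 C a' = a by rewrite gE h; field; exact: lt0r_neq0.
  split; last exact: mult4.
  move=> lam _; split; first exact: case3.
  by move=> ->; apply: D_at0; exact: ltW.
- rewrite ltr_pdivrMr // => h.
  have hg : a < gamma2 C a' by rewrite gE.
  have [b1 b2 b3] := case4b _ _ _ ha hg.
  split; last split => //.
    move=> lam _; split; first exact: case4.
    by case=> ->; [apply: D_at0; exact: ltW | exact: b1 | exact: b2].
  by apply: mult2 => //; apply/eqP => e; rewrite e in hg; lra.
Qed.
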